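(* Let $n<m$ and consider the uniform-threshold game $G_t=\langle n,m,p,t\rangle$. (i) If $\frac{1}{\lceil 2m/n\rceil-1}<p\le\frac{1}{\lceil m/n\rceil}$ and $t>p-\frac{p(\lfloor 1/p\rfloor+1)-1}{\lceil 2m/n\rceil-\lfloor 1/p\rfloor}$, let $s^*$ be a pure equilibrium with $w_j(s^* )=p$ for all $j$. (ii) If $p>\frac{1}{\lceil m/n\rceil}$ and there is $\epsilon>0$ with $t\ge(1-\frac nm)\frac nm+\epsilon$ when $m\bmod n=0$, and $t\ge \frac{1}{\lceil m/n\rceil}$ otherwise, let $s^*$ be a pure equilibrium with $w_j(s^* )=\frac{1}{\lceil m/n\rceil}$ for all $j$. In both cases $s^*$ maximizes the users' social welfare, i.e. $SW(s^* )\ge SW(s)$ for every strategy profile $s$, where $SW(s)=-\max_{1\le j\le m}|p-w_j(s)|$, and it maximizes publishers' exposure: every query is won by some player.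
   Context: Setting: integers $n,m$ with $n<m$ ($n$ players, queries $q_1,\dots,q_m$), a peak value $p\in(0,1]$ and a score function $f:[0,1]\to[0,1]$ single-peaked at $p$ ($p$ is the unique point such that $f$ is non-decreasing on $[0,p]$ and non-increasing on $[p,1]$). Each player $i$ chooses $d_i\in D=\{d\in[0,1]^m:\sum_j d^j\le1\}$, with score $f(d_i^j)$ for $q_j$; $s=(d_1,\dots,d_n)$ is a strategy profile. In the game $G_t=\langle n,m,p,t\rangle$ (uniform threshold $t$ for every query), player $i$'s document is eligible for $q_j$ iff $d_i^j\ge t$; among eligible documents those of highest score are the winners of $q_j$; if $q_j$ has $h_j(s)$ winners each receives $1/h_j(s)$, and a query with no eligible document is won by no player. $w_j(s)$ denotes the value $d_i^j$ of a winner of $q_j$ ($0$ if there is none). A pure equilibrium is a pure Nash equilibrium (no player can strictly increase her utility by a unilateral change of document) in which every query has at least one winner. Such equilibria $s^*$ exist under the hypotheses of (i) and (ii). *)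

(* Defs.v *)
From Stdlib Require Import Reals Lra Lia Arith ClassicalEpsilon.
Open Scope R_scope.

Fixpoint rsum (k : nat) (g : nat -> R) : R :=
  match k with O => 0 | S k' => rsum k' g + g k' end.

(* max(0, g 0, ..., g (k-1)); used only on nonnegative g with k >= 1. *)
Fixpoint rmax (k : nat) (g : nat -> R) : R :=
  match k with O => 0 | S k' => Rmax (rmax k' g) (g k') end.

Definition floorR (x : R) : Z := Int_part x.
Definition ceilR (x : R) : Z := (- Int_part (- x))%Z.

Definition valid_doc (m : nat) (d : nat -> R) : Prop :=
  (forall j, (j < m)%nat -> 0 <= d j <= 1) /\ rsum m d <= 1.

(* A strategy profile: s i = document of player i, for i < n. *)
Definition profile := nat -> nat -> R.

Definition valid_profile (n m : nat) (s : profile) : Prop :=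
  forall i, (i < n)%nat -> valid_doc m (s i).

Definition nondecr_on (f : R -> R) (a b : R) : Prop :=
  forall x y, a <= x -> x <= y -> y <= b -> f x <= f y.
Definition nonincr_on (f : R -> R) (a b : R) : Prop :=
  forall x y, a <= x -> x <= y -> y <= b -> f y <= f x.

Definition single_peaked (f : R -> R) (p : R) : Prop :=
  (forall x, 0 <= x <= 1 -> 0 <= f x <= 1) /\
  0 <= p <= 1 /\ nondecr_on f 0 p /\ nonincr_on f p 1 /\
  (forall q, 0 <= q <= 1 -> nondecr_on f 0 q -> nonincr_on f q 1 -> q = p).

Section Game.
Variables (n m : nat) (f : R -> R) (t : R).

Definition eligible (s : profile) (i j : nat) : Prop := t <= s i j.

Definition winner (s : profile) (i j : nat) : Prop :=
  (i < n)%nat /\ eligible s i j /\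
  (forall k, (k < n)%nat -> eligible s k j -> f (s k j) <= f (s i j)).

Definition indic (P : Prop) : R :=
  if excluded_middle_informative P then 1 else 0.

Definition nwinners (s : profile) (j : nat) : R :=
  rsum n (fun i => indic (winner s i j)).

Definition utility (s : profile) (i : nat) : R :=
  rsum m (fun j => indic (winner s i j) / nwinners s j).

Definition update (s : profile) (i : nat) (d : nat -> R) : profile :=
  fun k => if Nat.eqb k i then d else s k.

Definition has_winner (s : profile) (j : nat) : Prop :=
  exists i, winner s i j.

(* pure equilibrium: pure Nash equilibrium in which every query has a winner *)
Definition pure_equilibrium (s : profile) : Prop :=
  valid_profile n m s /\
  (forall i d, (i < n)%nat -> valid_doc m d ->
     utility (update s i d) i <= utility s i) /\
  (forall j, (j < m)%nat -> has_winner s j).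

(* w_j(s): the value d_i^j of a (chosen) winner of q_j, 0 if there is none *)
Definition wval (s : profile) (j : nat) : R :=
  match excluded_middle_informative (has_winner s j) with
  | left _ => s (epsilon (inhabits O) (fun i => winner s i j)) j
  | right _ => 0
  end.

End Game.

Definition SW (n m : nat) (f : R -> R) (t p : R) (s : profile) : R :=
  - rmax m (fun j => Rabs (p - wval n f t s j)).

(* Main.v *)
Require Import Defs.
From Stdlib Require Import Reals Lra Lia Arith ClassicalEpsilon.
Open Scope R_scope.

Lemma ceilR_spec x : x <= IZR (ceilR x) < x + 1.
Proof.
  unfold ceilR. rewrite opp_IZR. destruct (base_Int_part (- x)). lra.
Qed.

Lemma rmax_ge0 k g : 0 <= rmax k g.
Proof. induction k; simpl. lra. eapply Rle_trans; [apply IHk| apply Rmax_l]. Qed.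

Lemma rmax_ge k g j : (j < k)%nat -> g j <= rmax k g.
Proof.
  induction k; intros H; [lia|]. simpl.
  destruct (Nat.eq_dec j k) as [->|Hne]; [apply Rmax_r|].
  eapply Rle_trans; [apply IHk; lia| apply Rmax_l].
Qed.

Lemma rmax_le k g B : 0 <= B -> (forall j, (j < k)%nat -> g j <= B) -> rmax k g <= B.
Proof.
  intros HB; induction k; intros H; simpl. lra.
  apply Rmax_lub; [apply IHk; intros; apply H; lia| apply H; lia].
Qed.

Lemma rsum_nonneg k g : (forall j, (j < k)%nat -> 0 <= g j) -> 0 <= rsum k g.
Proof. induction k; intros H; simpl. lra. assert (0 <= g k) by (apply H; lia).
  assert (0 <= rsum k g) by (apply IHk; intros; apply H; lia). lra. Qed.

Lemma rsum_le k g h : (forall j, (j < k)%nat -> g j <= h j) -> rsum k g <= rsum k h.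
Proof. induction k; intros H; simpl. lra. assert (g k <= h k) by (apply H; lia).
  assert (rsum k g <= rsum k h) by (apply IHk; intros; apply H; lia). lra. Qed.

Lemma rsum_const k c : rsum k (fun _ => c) = INR k * c.
Proof. induction k; simpl rsum. simpl; lra. rewrite IHk, S_INR. lra. Qed.

Lemma rsum_plus k g h : rsum k (fun i => g i + h i) = rsum k g + rsum k h.
Proof. induction k; simpl. lra. rewrite IHk. lra. Qed.

Fixpoint cnt (k : nat) (g : nat -> nat) (i : nat) : nat :=
  match k with O => O | S k' => (cnt k' g i + if Nat.eqb (g k') i then 1 else 0)%nat end.

Lemma rsum_ind a k : rsum k (fun i => INR (if Nat.eqb a i then 1%nat else 0%nat)) =
  if Nat.ltb a k then 1 else 0.
Proof.
  induction k; simpl rsum. destruct a; reflexivity.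
  rewrite IHk.
  destruct (Nat.eqb_spec a k); destruct (Nat.ltb_spec a k); destruct (Nat.ltb_spec a (S k));
    simpl; try lra; lia.
Qed.

Lemma cnt_sum n M g : (forall j, (j < M)%nat -> (g j < n)%nat) ->
  rsum n (fun i => INR (cnt M g i)) = INR M.
Proof.
  induction M; intros H; simpl cnt.
  - rewrite rsum_const. simpl. lra.
  - assert (E : rsum n (fun i => INR (cnt M g i + (if Nat.eqb (g M) i then 1 else 0))) =
      rsum n (fun i => INR (cnt M g i) + INR (if Nat.eqb (g M) i then 1%nat else 0%nat))).
    { clear. induction n; simpl; [reflexivity|]. rewrite IHn, plus_INR. reflexivity. }
    rewrite E, rsum_plus, rsum_ind, IHM by (intros; apply H; lia).
    destruct (Nat.ltb_spec (g M) n). rewrite S_INR; lra. specialize (H M); lia.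
Qed.

Lemma cnt_bound M g i (sv : nat -> R) c :
  (forall j, (j < M)%nat -> g j = i -> c < sv j) ->
  (forall j, (j < M)%nat -> 0 <= sv j) ->
  cnt M g i = O \/ INR (cnt M g i) * c < rsum M sv.
Proof.
  induction M; intros H1 H2; simpl. left; reflexivity.
  assert (IH : cnt M g i = O \/ INR (cnt M g i) * c < rsum M sv)
    by (apply IHM; intros; [apply H1|apply H2]; auto; lia).
  assert (0 <= rsum M sv) by (apply rsum_nonneg; intros; apply H2; lia).
  assert (0 <= sv M) by (apply H2; lia).
  destruct (Nat.eqb_spec (g M) i).
  - assert (c < sv M) by (apply H1; auto).
    right. rewrite plus_INR. simpl INR. destruct IH as [E|E].
    + rewrite E. simpl. lra.
    + lra.
  - rewrite Nat.add_0_r. destruct IH as [E|E]; [left; auto| right; lra].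
Qed.

Theorem lemma2 (n m : nat) (p t : R) (f : R -> R) :
  (0 < n)%nat -> (n < m)%nat -> 0 < p <= 1 -> single_peaked f p ->
  (* (i) *)
  ((1 / (IZR (ceilR (2 * INR m / INR n)) - 1) < p /\
    p <= 1 / IZR (ceilR (INR m / INR n)) /\
    t > p - (p * (IZR (floorR (1 / p)) + 1) - 1) /
              (IZR (ceilR (2 * INR m / INR n)) - IZR (floorR (1 / p)))) ->
   forall s, pure_equilibrium n m f t s ->
   (forall j, (j < m)%nat -> wval n f t s j = p) ->
   (forall s', valid_profile n m s' -> SW n m f t p s' <= SW n m f t p s) /\
   (forall j, (j < m)%nat -> exists i, winner n f t s i j)) /\
  (* (ii) *)
  ((p > 1 / IZR (ceilR (INR m / INR n)) /\
    (exists eps, eps > 0 /\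
       (Nat.modulo m n = 0%nat ->
          t >= (1 - INR n / INR m) * (INR n / INR m) + eps) /\
       (Nat.modulo m n <> 0%nat -> t >= 1 / IZR (ceilR (INR m / INR n))))) ->
   forall s, pure_equilibrium n m f t s ->
   (forall j, (j < m)%nat -> wval n f t s j = 1 / IZR (ceilR (INR m / INR n))) ->
   (forall s', valid_profile n m s' -> SW n m f t p s' <= SW n m f t p s) /\
   (forall j, (j < m)%nat -> exists i, winner n f t s i j)).
Proof.
  intros Hn Hnm Hp Hf. split.
  - intros _ s [_ [_ Hw]] Hws. split; [|exact Hw].
    intros s' _. unfold SW.
    assert (rmax m (fun j => Rabs (p - wval n f t s j)) <= 0).
    { apply rmax_le; [lra|]. intros j Hj. rewrite Hws by auto.
      rewrite Rminus_diag, Rabs_R0. lra. }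
    pose proof (rmax_ge0 m (fun j => Rabs (p - wval n f t s' j))). lra.
  - intros [Hpc _] s [_ [_ Hw]] Hws. split; [|exact Hw].
    set (k := IZR (ceilR (INR m / INR n))) in *.
    set (c := 1 / k) in *.
    assert (Hn0 : 0 < INR n) by (apply lt_0_INR; lia).
    assert (Hmn : INR n < INR m) by (apply lt_INR; lia).
    destruct (ceilR_spec (INR m / INR n)) as [Hk1 Hk2]. fold k in Hk1, Hk2.
    assert (Hq : 1 < INR m / INR n).
    { apply (Rmult_lt_reg_r (INR n)); auto. unfold Rdiv.
      rewrite Rmult_assoc, Rinv_l by lra. lra. }
    assert (Hk0 : 0 < k) by lra.
    assert (Hnk : INR n * (k - 1) < INR m).
    { assert (k - 1 < INR m / INR n) by lra.
      apply (Rmult_lt_compat_l (INR n)) in H; auto.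
      unfold Rdiv in H. rewrite <- Rmult_assoc, (Rmult_comm (INR n) (INR m)),
        Rmult_assoc, Rinv_r in H by lra. lra. }
    assert (Hc0 : 0 < c) by (unfold c; unfold Rdiv; rewrite Rmult_1_l; apply Rinv_0_lt_compat; lra).
    intros s' Hs'.
    assert (Hex : exists j, (j < m)%nat /\ wval n f t s' j <= c).
    { apply NNPP. intros Hno.
      assert (Hall : forall j, (j < m)%nat -> c < wval n f t s' j).
      { intros j Hj. apply Rnot_le_lt. intros Hle. apply Hno. exists j. auto. }
      set (g := fun j => epsilon (inhabits O) (fun i => winner n f t s' i j)).
      assert (Hg : forall j, (j < m)%nat -> winner n f t s' (g j) j /\
                 wval n f t s' j = s' (g j) j).
      { intros j Hj. specialize (Hall j Hj). unfold wval in *.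
        destruct (excluded_middle_informative (has_winner n f t s' j)) as [[i0 Hi0]|].
        - split; [|reflexivity]. unfold g. apply (epsilon_spec (inhabits O) (fun i => winner n f t s' i j)).
          exists i0; exact Hi0.
        - lra. }
      assert (Hcnt : forall i, (i < n)%nat -> INR (cnt m g i) <= k - 1).
      { intros i Hi. destruct (Hs' i Hi) as [Hd1 Hd2].
        destruct (cnt_bound m g i (s' i) c) as [E|E].
        - intros j Hj Hgj. destruct (Hg j Hj) as [_ E]. rewrite <- Hgj, <- E. auto.
        - intros j Hj. apply Hd1; auto.
        - rewrite E. simpl.
          assert (1 <= k). { assert (k > 0) by lra.
            unfold k in *. apply IZR_le. apply lt_IZR in Hk0. lia. }
          lra.
        - assert (INR (cnt m g i) < k).
          { assert (INR (cnt m g i) * c < 1) by lra. unfold c in H.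
            apply (Rmult_lt_compat_r k) in H; auto.
            unfold Rdiv in H. rewrite Rmult_assoc, Rmult_1_l, Rinv_l, Rmult_1_r in H by lra. lra. }
          rewrite INR_IZR_INZ in *. unfold k in *.
          apply lt_IZR in H. rewrite <- minus_IZR. apply IZR_le. lia. }
      assert (Hsum : rsum n (fun i => INR (cnt m g i)) = INR m).
      { apply cnt_sum. intros j Hj. apply (Hg j Hj). }
      assert (rsum n (fun i => INR (cnt m g i)) <= rsum n (fun _ => k - 1))
        by (apply rsum_le; auto).
      rewrite rsum_const in H. lra. }
    destruct Hex as [j [Hj Hwj]]. unfold SW.
    assert (rmax m (fun j => Rabs (p - wval n f t s j)) <= p - c).
    { apply rmax_le; [lra|]. intros j' Hj'. rewrite Hws by auto.
      rewrite Rabs_right; lra. }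
    pose proof (rmax_ge m (fun j => Rabs (p - wval n f t s' j)) j Hj). simpl in H0.
    pose proof (Rle_abs (p - wval n f t s' j)). lra.
Qed.
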